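(* For every $N_0\in\mathbb N_{\ge1}$ and every $d\in\mathbb N_{\ge 1}$ there is a one-sided recommendation problem $T_d$ (in the exposure setting) with $d+1$ items and $N_0(d+1)$ users such that, for every $\theta\in\Theta$, letting $u^\theta$ be the maximizer of $W_\theta$ over $\mathcal U$, and for every choice of $u^{\mathrm{qua},\beta}\in\mathcal U^{\mathrm{qua}}_\beta$ ($\beta>0$): (i) there exists $\beta>0$ such that $u^\theta_{\mathcal N}\succ_L u^{\mathrm{qua},\beta}_{\mathcal N}$ and $u^\theta_{\mathcal I}\succ_L u^{\mathrm{qua},\beta}_{\mathcal I}$; (ii) the limit $L_d=\lim_{\beta\to\infty}\frac{\sum_{i\in\mathcal N}u^{\mathrm{qua},\beta}_i}{\sum_{i\in\mathcal N}u^\theta_i}$ exists, does not depend on the choice of the maximizers, and $L_d\to\frac56$ as $d\to\infty$.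
   Context: One-sided exposure setting: users $\mathcal N=\{1,\dots,|\mathcal N|\}$, items $\mathcal I=\{|\mathcal N|+1,\dots,n\}$, $n=|\mathcal N|+|\mathcal I|$; exposure weights $v\in\mathbb R^{|\mathcal I|}$ with $v_1\ge\dots\ge v_{|\mathcal I|}\ge0$; values $\mu_{ij}\ge0$ for $i\in\mathcal N$, $j\in\mathcal I$. A ranking tensor $P=(P_{ijk})_{i\in\mathcal N,j\in\mathcal I,k\in[|\mathcal I|]}$ is such that each $P_i=(P_{ijk})_{j,k}$ is doubly stochastic; $\mathcal P$ is the set of ranking tensors, $P_{ij}v=\sum_kP_{ijk}v_k$. User utility $u_i(P)=\sum_{j\in\mathcal I}\mu_{ij}P_{ij}v$ ($i\in\mathcal N$); item utility (exposure) $u_j(P)=\sum_{i\in\mathcal N}P_{ij}v$ ($j\in\mathcal I$). $u(P)=(u_i(P))_{i\in[n]}$, $\mathcal U=\{u(P):P\in\mathcal P\}$, $u_{\mathcal N}=(u_i)_{i\in\mathcal N}$, $u_{\mathcal I}=(u_j)_{j\in\mathcal I}$. A recommendation problem is specified by $\mathcal N,\mathcal I,\mu,v$. Lorenz dominance: for $x\in\mathbb R^m$ with increasingly sorted entries $x_{(1)}\le\dots\le x_{(m)}$, let $\bar x_k=\sum_{l\le k}x_{(l)}$; $x\succeq_L y$ iff $\bar x_k\ge\bar y_k$ for all $k$; $x\succ_L y$ iff $x\succeq_L y$ and $\bar x_k>\bar y_k$ for some $k$. Welfare: $\psi(x,\alpha)=x^\alpha$ ($\alpha>0$), $\log x$ ($\alpha=0$),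 $-x^\alpha$ ($\alpha<0$), with $\psi(0,\alpha)=-\infty$ for $\alpha\le0$; $W_\theta(u)=(1-\lambda)\sum_{i\in\mathcal N}\psi(u_i,\alpha_1)+\lambda\sum_{j\in\mathcal I}\psi(u_j,\alpha_2)$ for $\theta=(\lambda,\alpha_1,\alpha_2)$; $\Theta=(0,1)\times(-\infty,1)^2$. Quality-weighted exposure: $q_j=\sum_{i\in\mathcal N}\mu_{ij}$, $Q=\sum_{j\in\mathcal I}q_j$, $E=|\mathcal N|\,\|v\|_1$, $D^{\mathrm{qua}}(u)=\frac1n\sum_{j\in\mathcal I}\big(u_j-\frac{q_jE}{Q}\big)^2$, $F^{\mathrm{qua}}_\beta(u)=\sum_{i\in\mathcal N}u_i-\beta\sqrt{D^{\mathrm{qua}}(u)}$, and $\mathcal U^{\mathrm{qua}}_\beta=\arg\max_{u\in\mathcal U}F^{\mathrm{qua}}_\beta(u)$. *)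

(* Defs.v *)
From HB Require Import structures.
From mathcomp Require Import all_boot all_order all_algebra.
From mathcomp Require Import all_classical all_reals all_analysis.
Set Implicit Arguments. Unset Strict Implicit. Unset Printing Implicit Defensive.
Import Order.TTheory GRing.Theory Num.Theory.
Import numFieldNormedType.Exports.
Local Open Scope ring_scope.

Section Recsys.
Variable R : realType.
(* m = |N| users, k = |I| items (= number of positions) *)
Variables (m k : nat).

Definition profile := (('I_m -> R) * ('I_k -> R))%type.

(* ranking tensor: P i j p = P_{ijp}, user i, item j, position p *)
Definition ranking_tensor (P : 'I_m -> 'I_k -> 'I_k -> R) : Prop :=
  forall i : 'I_m,
    (forall j p, 0 <= P i j p) /\
    (forall j, \sum_(p < k) P i j p = 1) /\
    (forall p, \sum_(j < k) P i j p = 1).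

Variables (mu : 'I_m -> 'I_k -> R) (v : 'I_k -> R).

Definition Pv (P : 'I_m -> 'I_k -> 'I_k -> R) i j := \sum_(p < k) P i j p * v p.

Definition user_util P (i : 'I_m) := \sum_(j < k) mu i j * Pv P i j.
Definition item_util P (j : 'I_k) := \sum_(i < m) Pv P i j.

Definition util P : profile := (user_util P, item_util P).

Definition Uset : set profile :=
  [set u | exists P, ranking_tensor P /\ u = util P].

Definition psi (x alpha : R) : \bar R :=
  if 0 < alpha then (x `^ alpha)%:E
  else if x <= 0 then -oo%E
  else if alpha == 0 then (ln x)%:E
  else (- x `^ alpha)%:E.

Definition W (lam a1 a2 : R) (u : profile) : \bar R :=
  (((1 - lam)%:E * (\sum_(i < m) psi (u.1 i) a1))
   + (lam%:E * (\sum_(j < k) psi (u.2 j) a2)))%E.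

Definition in_Theta (lam a1 a2 : R) : Prop :=
  0 < lam < 1 /\ a1 < 1 /\ a2 < 1.

Definition W_maximizer lam a1 a2 (u : profile) : Prop :=
  Uset u /\ forall u', Uset u' -> (W lam a1 a2 u' <= W lam a1 a2 u)%E.

Definition qual (j : 'I_k) := \sum_(i < m) mu i j.
Definition Qtot := \sum_(j < k) qual j.
Definition Etot := m%:R * \sum_(p < k) `|v p|.
Definition Dqua (u : profile) :=
  (m + k)%:R^-1 * \sum_(j < k) (u.2 j - qual j * Etot / Qtot) ^+ 2.
Definition Fqua (beta : R) (u : profile) :=
  \sum_(i < m) u.1 i - beta * Num.sqrt (Dqua u).
Definition Uqua (beta : R) : set profile :=
  [set u | Uset u /\ forall u', Uset u' -> Fqua beta u' <= Fqua beta u].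

End Recsys.

Definition lorenz_sum (R : realType) (n : nat) (x : 'I_n -> R) (l : nat) : R :=
  \sum_(i < l) nth 0 (sort <=%R [seq x i | i <- enum 'I_n]) i.

Definition lorenz_ge (R : realType) (n : nat) (x y : 'I_n -> R) : Prop :=
  forall l, (0 < l <= n)%N -> lorenz_sum y l <= lorenz_sum x l.

Definition lorenz_gt (R : realType) (n : nat) (x y : 'I_n -> R) : Prop :=
  lorenz_ge x y /\ exists l, (0 < l <= n)%N /\ lorenz_sum y l < lorenz_sum x l.

(* Main.v *)
Require Import Defs.
From HB Require Import structures.
From mathcomp Require Import all_boot all_order all_algebra.
From mathcomp Require Import all_classical all_reals all_analysis.
From mathcomp Require Import ring lra perm.
Import Order.TTheory GRing.Theory Num.Theory.
Import numFieldNormedType.Exports.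
Local Open Scope classical_set_scope.
Local Open Scope ring_scope.
Set Implicit Arguments. Unset Strict Implicit. Unset Printing Implicit Defensive.
Section Lor.
Variable R : realType.

Definition srt n (x : 'I_n -> R) := sort <=%R [seq x i | i <- enum 'I_n].

Lemma size_srt n (x : 'I_n -> R) : size (srt x) = n.
Proof. by rewrite /srt size_sort size_map size_enum_ord. Qed.

Lemma srt_mem n (x : 'I_n -> R) i : (i < n)%N -> exists j, nth 0 (srt x) i = x j.
Proof.
move=> hi; have : nth 0 (srt x) i \in srt x by rewrite mem_nth // size_srt.
by rewrite mem_sort => /mapP [j _ ->]; exists j.
Qed.

Lemma lorenz_total n (x : 'I_n -> R) : lorenz_sum x n = \sum_i x i.
Proof.
rewrite /lorenz_sum.
have -> : \sum_(i < n) nth 0 (sort <=%R [seq x i | i <- enum 'I_n]) i = \sum_(i < size (srt x)) nth 0 (srt x) i.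
  by rewrite size_srt.
rewrite -(big_mkord xpredT (fun i => nth 0 (srt x) i)) -(big_nth 0 xpredT id).
rewrite /srt (perm_big _ (permEl (perm_sort _ _))) big_map big_enum //.
Qed.

Lemma lorenz_le_const n (x : 'I_n -> R) c l : (forall i, x i <= c) -> (l <= n)%N ->
  lorenz_sum x l <= l%:R * c.
Proof.
move=> hx hl; rewrite /lorenz_sum mulr_natl -[in X in _ <= X](card_ord l) -sumr_const.
apply: ler_sum => i _; have [j ->] := srt_mem x (leq_trans (ltn_ord i) hl); exact: hx.
Qed.

Lemma lorenz_const n (x : 'I_n -> R) c l : (forall i, x i = c) -> (l <= n)%N ->
  lorenz_sum x l = l%:R * c.
Proof.
move=> hx hl; rewrite /lorenz_sum mulr_natl -[in X in _ = X](card_ord l) -sumr_const.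
apply: eq_bigr => i _; have [j ->] := srt_mem x (leq_trans (ltn_ord i) hl); exact: hx.
Qed.

Lemma lorenz_min n (x : 'I_n -> R) j : lorenz_sum x 1 <= x j.
Proof.
rewrite /lorenz_sum big_ord1 /=.
have : x j \in srt x by rewrite mem_sort; apply/mapP; exists j => //; rewrite mem_enum.
move=> /(nthP 0) [p hp <-].
apply: (le_sorted_leq_nth 0 (sort_le_sorted _)) => //.
by rewrite inE (leq_ltn_trans _ hp).
Qed.

Lemma lorenz_avg n (x : 'I_n -> R) l : (0 < l <= n)%N ->
  lorenz_sum x l * n%:R <= l%:R * \sum_i x i.
Proof.
move=> /andP [l0 ln]; rewrite -lorenz_total /lorenz_sum -!(big_mkord xpredT (fun i => nth 0 (srt x) i)).
rewrite (big_cat_nat (leq0n l) ln) /=.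
set s := srt x; set p := nth 0 s l.-1.
have hs := sort_le_sorted [seq x i | i <- enum 'I_n].
have mono : forall i j, (i <= j)%N -> (j < n)%N -> nth 0 s i <= nth 0 s j.
  move=> i j hij hj; apply: (le_sorted_leq_nth 0 hs) => //; rewrite inE size_sort size_map size_enum_ord //.
  exact: leq_ltn_trans hj.
have hA : \sum_(0 <= i < l) nth 0 s i <= l%:R * p.
  rewrite mulr_natl -{2}(subn0 l) -sumr_const_nat; apply: ler_sum_nat => i /andP [_ hi].
  apply: mono; first by rewrite -ltnS prednK.
  by rewrite prednK // (leq_trans _ ln).
have hB : (n - l)%:R * p <= \sum_(l <= i < n) nth 0 s i.
  have -> : (n - l)%:R * p = \sum_(l <= i < n) p by rewrite sumr_const_nat mulr_natl.
  apply: ler_sum_nat => i /andP [hi1 hi2].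
  apply: mono => //; apply: (leq_trans _ hi1); exact: leq_pred.
set A := \sum_(0 <= i < l) _ in hA *; set B := \sum_(l <= i < n) _ in hB *.
have hnl : (n%:R : R) = l%:R + (n - l)%:R by rewrite -natrD subnKC.
have h1 : A * (n - l)%:R <= l%:R * p * (n - l)%:R by apply: ler_wpM2r.
have h2 : l%:R * ((n - l)%:R * p) <= l%:R * B by apply: ler_wpM2l.
rewrite hnl; nra.
Qed.
End Lor.

Section Psi.
Variable R : realType.
Local Notation psi := (@psi R).

Definition phi (x a : R) := if 0 < a then x `^ a else if a == 0 then ln x else - x `^ a.

Lemma psi_pos x a : 0 < x -> psi x a = (phi x a)%:E.
Proof. by move=> hx; rewrite /psi /phi; case: ifP => // _; rewrite leNgt hx /=; case: ifP. Qed.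

Lemma powR_exp (t a : R) : 0 < t -> t `^ a = expR (a * ln t).
Proof. by move=> ht; rewrite /powR gt_eqF. Qed.

Lemma ln_lt_sub1 (y : R) : 0 < y -> y != 1 -> ln y < y - 1.
Proof.
move=> hy hy1; have h := @expR_gt1Dx R (ln y).
rewrite lnK ?posrE // in h; have : ln y != 0 by rewrite ln_eq0.
move/h => h2; lra.
Qed.

Lemma ln_le_sub1 (y : R) : 0 < y -> ln y <= y - 1.
Proof.
move=> hy; case: (eqVneq y 1) => [->|h]; first by rewrite ln1; lra.
exact/ltW/ln_lt_sub1.
Qed.

Lemma bern_lt (a t : R) : 0 < a < 1 -> 0 < t -> t != 1 -> t `^ a < 1 + a * (t - 1).
Proof.
move=> /andP [a0 a1] ht ht1.
set M := a * t + 1 - a.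
have hM : 0 < M by rewrite /M; nra.
have htM : 0 < t / M by rewrite divr_gt0.
have hiM : 0 < M^-1 by rewrite invr_gt0.
have e1 : ln (t / M) = ln t - ln M by rewrite ln_div // posrE.
have e2 : ln (M^-1) = - ln M by rewrite lnV // posrE.
have key : a * (t / M - 1) + (1 - a) * (M^-1 - 1) = 0.
  rewrite /M; field; rewrite -/M; exact: lt0r_neq0.
have h1 := ln_le_sub1 htM; have h2 := ln_le_sub1 hiM.
have strict : a * ln (t / M) + (1 - a) * ln (M^-1) < a * (t / M - 1) + (1 - a) * (M^-1 - 1).
  case: (eqVneq (t / M) 1) => htm.
  - have hM1 : M^-1 != 1.
      apply/negP => /eqP hm; move: htm; rewrite hm mulr1 => /eqP; by rewrite (negbTE ht1).
    have := ln_lt_sub1 hiM hM1 => h3.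
    have := ler_wpM2l (ltW a0) h1; have : (1 - a) * ln M^-1 < (1 - a) * (M^-1 - 1).
      by rewrite ltr_pM2l // subr_gt0.
    lra.
  - have := ln_lt_sub1 htM htm => h3.
    have : a * ln (t / M) < a * (t / M - 1) by rewrite ltr_pM2l.
    have : (1 - a) * ln M^-1 <= (1 - a) * (M^-1 - 1) by rewrite ler_wpM2l // subr_ge0 ltW.
    lra.
rewrite key e1 e2 in strict.
have : a * ln t < ln M by lra.
rewrite -ltr_expR lnK ?posrE // -powR_exp // => h; rewrite /M in h; lra.
Qed.

Lemma bern_gt (a t : R) : a < 0 -> 0 < t -> t != 1 -> 1 + a * (t - 1) < t `^ a.
Proof.
move=> a0 ht ht1; rewrite powR_exp //.
have h1 := expR_ge1Dx (a * ln t).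
have h2 := ln_lt_sub1 ht ht1.
have : a * (t - 1) < a * ln t by rewrite ltr_nM2l.
lra.
Qed.

Lemma tangent_strict a c : a < 1 -> 0 < c -> exists s, 0 <= s /\ forall x, 0 <= x -> x != c ->
  (psi x a < (phi c a + s * (x - c))%:E)%E.
Proof.
move=> a1 c0.
have hc : c != 0 by rewrite gt_eqF.
have ca : 0 < c `^ a by apply: powR_gt0.
case: (ltrgt0P a) => [a0|a0|a0].
- exists (a * c `^ a / c); split; first by apply: divr_ge0; [apply: mulr_ge0|]; apply: ltW.
  move=> x x0 xc; rewrite /psi /phi a0 lte_fin.
  case: (eqVneq x 0) => [->|xn0].
    rewrite powR0 ?gt_eqF //.
    have -> : c `^ a + a * c `^ a / c * (0 - c) = (1 - a) * c `^ a by field.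
    by rewrite mulr_gt0 // subr_gt0.
  have xp : 0 < x by rewrite lt0r xn0.
  have -> : x = c * (x / c) by field.
  rewrite powRM ?ltW ?divr_gt0 //.
  have -> : c `^ a + a * c `^ a / c * (c * (x / c) - c) = c `^ a * (1 + a * (x / c - 1)) by field.
  rewrite ltr_pM2l //; apply: bern_lt; rewrite ?divr_gt0 ?a0 ?a1 //.
  apply/negP => /eqP h; move: xc; have -> : x = c by rewrite -[x](divfK hc) h mul1r.
  by rewrite eqxx.
- exists (- a * c `^ a / c); split; first by apply: divr_ge0; [apply: mulr_ge0; rewrite ?oppr_ge0|]; apply: ltW.
  move=> x x0 xc; have a0' : (0 < a) = false by rewrite ltNge (ltW a0).
  rewrite /psi /phi a0' (negbTE (ltr0_neq0 a0)).
  case: (eqVneq x 0) => [->|xn0]; first by rewrite lexx ltNyr.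
  have xp : 0 < x by rewrite lt0r xn0.
  rewrite leNgt xp /= lte_fin.
  have -> : x = c * (x / c) by field.
  rewrite powRM ?ltW ?divr_gt0 //.
  have -> : - c `^ a + - a * c `^ a / c * (c * (x / c) - c) = - (c `^ a * (1 + a * (x / c - 1))) by field.
  rewrite ltrN2 ltr_pM2l //; apply: bern_gt; rewrite ?divr_gt0 //.
  apply/negP => /eqP h; move: xc; have -> : x = c by rewrite -[x](divfK hc) h mul1r.
  by rewrite eqxx.
- exists c^-1; split; first by rewrite invr_ge0 ltW.
  move=> x x0 xc; rewrite /psi /phi a0 ltxx eqxx.
  case: (eqVneq x 0) => [->|xn0]; first by rewrite lexx ltNyr.
  have xp : 0 < x by rewrite lt0r xn0.
  rewrite leNgt xp /= lte_fin.
  have -> : ln x = ln c + ln (x / c).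
    by rewrite -lnM ?posrE ?divr_gt0 //; congr ln; field.
  have -> : c^-1 * (x - c) = x / c - 1 by field.
  rewrite ltrD2l; apply: ln_lt_sub1; rewrite ?divr_gt0 //.
  apply/negP => /eqP h; move: xc; have -> : x = c by rewrite -[x](divfK hc) h mul1r.
  by rewrite eqxx.
Qed.

Lemma ltle_addE (a b : \bar R) (x y : R) : (a < x%:E)%E -> (b <= y%:E)%E -> (a + b < (x + y)%:E)%E.
Proof.
case: b => [r| |] //= ha hb.
- by rewrite EFinD; apply: lte_leD.
- case: a ha => [r| |] //= _; exact: ltNyr.
Qed.

Lemma sum_psi a c n (x : 'I_n -> R) : a < 1 -> 0 < c -> (forall i, 0 <= x i) ->
  \sum_i x i <= n%:R * c ->
  (\sum_i psi (x i) a <= (n%:R * phi c a)%:E)%E /\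
  ((exists i, x i != c) -> (\sum_i psi (x i) a < (n%:R * phi c a)%:E)%E).
Proof.
move=> a1 c0 x0 hs; have [s [s0 hT]] := tangent_strict a1 c0.
have hle : forall i, (psi (x i) a <= (phi c a + s * (x i - c))%:E)%E.
  move=> i; case: (eqVneq (x i) c) => [->|h]; last exact/ltW/hT.
  by rewrite psi_pos // subrr mulr0 addr0.
have hsum : \sum_i (phi c a + s * (x i - c)) <= n%:R * phi c a.
  rewrite big_split /= sumr_const card_ord -mulr_natl -mulr_sumr sumrB sumr_const card_ord.
  have : s * (\sum_i x i - c *+ n) <= 0.
    apply: mulr_ge0_le0 => //; rewrite subr_le0 -mulr_natl mulrC; lra.
  lra.
split.
  apply: le_trans; first by apply: lee_sum => i _; exact: hle.
  by rewrite sumEFin lee_fin.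
move=> [i0 hi0].
rewrite (bigD1 i0) //=.
apply: (@lt_le_trans _ _ ((phi c a + s * (x i0 - c)) + \sum_(i | i != i0) (phi c a + s * (x i - c)))%:E).
  apply: ltle_addE; first exact: hT.
  by rewrite -sumEFin; apply: lee_sum => i _.
by rewrite lee_fin -(bigD1 (F := fun i => phi c a + s * (x i - c)) i0 erefl).
Qed.
End Psi.

Section Model.
Variables (R : realType) (N0 d : nat).
Local Notation m := (N0 * d.+1)%N.
Local Notation k := d.+1.

Definition gord (i : 'I_m) : 'I_k := inord (i %/ N0)%N.
Definition muI (i : 'I_m) (j : 'I_k) : R :=
  if j == gord i then 1 else if j == ord0 then 2^-1 else 0.
Definition vI (p : 'I_k) : R := if p == ord0 then 1 else 0.

Hypothesis hN0 : (0 < N0)%N.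

Lemma count_nat n (f : nat -> R) :
  \sum_(0 <= i < N0 * n) f (i %/ N0)%N = N0%:R * \sum_(0 <= g < n) f g.
Proof.
elim: n => [|n IH]; first by rewrite muln0 !big_geq // mulr0.
rewrite (@big_cat_nat _ _ _ (N0 * n)) //=; last by rewrite leq_mul2l ltnW ?orbT.
rewrite IH big_nat_recr //= mulrDr; congr (_ + _).
rewrite -{1}(add0n (N0 * n)%N) big_addn mulnS addnK.
rewrite (@eq_big_nat _ _ _ 0 N0 _ (fun=> f n)); last first.
  move=> i /andP [_ hi]; rewrite mulnC divnDMl // divn_small //.
by rewrite sumr_const_nat subn0 mulr_natl.
Qed.

Lemma count_ord (F : 'I_k -> R) : \sum_(i < m) F (gord i) = N0%:R * \sum_(j < k) F j.
Proof.
rewrite -(big_mkord xpredT (fun i => F (inord (i %/ N0)%N))) (count_nat d.+1 (fun g => F (inord g))) big_mkord.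
by congr (_ * _); apply: eq_bigr => j _; rewrite inord_val.
Qed.

Local Notation mu := muI.
Local Notation v := vI.

Lemma Pv0 (P : 'I_m -> 'I_k -> 'I_k -> R) i j : Pv v P i j = P i j ord0.
Proof.
rewrite /Pv (bigD1 ord0) //= /vI eqxx mulr1 big1 ?addr0 // => p hp.
by rewrite (negbTE hp) mulr0.
Qed.

Lemma mu_le1 i j : mu i j <= 1.
Proof. rewrite /muI; case: ifP => _ //; case: ifP => _; lra. Qed.
Lemma mu_ge0 i j : 0 <= mu i j.
Proof. rewrite /muI; case: ifP => _ //; case: ifP => _; lra. Qed.

Section Feas.
Variable P : 'I_m -> 'I_k -> 'I_k -> R.
Hypothesis hP : ranking_tensor P.

Lemma x_ge0 i j : 0 <= P i j ord0.
Proof. by have [h _] := hP i. Qed.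
Lemma x_sum i : \sum_j P i j ord0 = 1.
Proof. by have [_ [_ h]] := hP i. Qed.
Lemma x_le1 i j : P i j ord0 <= 1.
Proof.
rewrite -(x_sum i) (bigD1 j) //= lerDl; apply: sumr_ge0 => l _; exact: x_ge0.
Qed.

Lemma uu_ge0 i : 0 <= user_util mu v P i.
Proof. by apply: sumr_ge0 => j _; rewrite Pv0 mulr_ge0 ?mu_ge0 ?x_ge0. Qed.

Lemma uu_le1 i : user_util mu v P i <= 1.
Proof.
rewrite /user_util -(x_sum i); apply: ler_sum => j _; rewrite Pv0.
by rewrite ler_piMl ?x_ge0 ?mu_le1.
Qed.

Lemma uu_le i : user_util mu v P i <= 1 - (1 - mu i ord0) * P i ord0 ord0.
Proof.
rewrite /user_util -{1}(x_sum i) (bigD1 ord0) //= [X in _ <= X - _](bigD1 ord0) //= Pv0.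
have : \sum_(j | j != ord0) mu i j * Pv v P i j <= \sum_(j | j != ord0) P i j ord0.
  apply: ler_sum => j _; rewrite Pv0; by rewrite ler_piMl ?x_ge0 ?mu_le1.
lra.
Qed.

Lemma iu_ge0 j : 0 <= item_util v P j.
Proof. by apply: sumr_ge0 => i _; rewrite Pv0 x_ge0. Qed.

Lemma iu_sum : \sum_j item_util v P j = m%:R.
Proof.
rewrite /item_util exchange_big /=.
rewrite (eq_bigr (fun=> 1)) ?sumr_const ?card_ord // => i _.
by rewrite -(x_sum i); apply: eq_bigr => j _; rewrite Pv0.
Qed.

Lemma uu_sum : \sum_i user_util mu v P i <= m%:R - (item_util v P ord0 - N0%:R) / 2.
Proof.
have h1 : \sum_i user_util mu v P i <= \sum_i (1 - (1 - mu i ord0) * P i ord0 ord0).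
  by apply: ler_sum => i _; apply: uu_le.
have h2 : forall i : 'I_m, 2^-1 * (P i ord0 ord0 - (gord i == ord0)%:R) <= (1 - mu i ord0) * P i ord0 ord0.
  move=> i; rewrite /muI; have := x_le1 i ord0; have := x_ge0 i ord0.
  case: (eqVneq (ord0 : 'I_k) (gord i)) => [_|hne] /=; first lra.
  lra.
have h3 : \sum_i 2^-1 * (P i ord0 ord0 - (gord i == ord0)%:R) <= \sum_i (1 - mu i ord0) * P i ord0 ord0.
  by apply: ler_sum => i _; exact: h2.
have e1 : \sum_i 2^-1 * (P i ord0 ord0 - (gord i == ord0)%:R) = 2^-1 * (item_util v P ord0 - N0%:R).
  have -> : item_util v P ord0 = \sum_i P i ord0 ord0 by apply: eq_bigr => i _; rewrite Pv0.
  rewrite -mulr_sumr sumrB.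
  rewrite (count_ord (fun j => (j == ord0)%:R)).
  have -> : \sum_(j < k) ((j == ord0)%:R : R) = 1.
    by rewrite (bigD1 ord0) //= big1 ?addr0 // => j /negbTE ->.
  by rewrite mulr1.
have e2 : \sum_(i < m) (1 - (1 - mu i ord0) * P i ord0 ord0) = m%:R - \sum_i (1 - mu i ord0) * P i ord0 ord0.
  by rewrite sumrB sumr_const card_ord.
lra.
Qed.
End Feas.

Definition Ps (s : R) (i : 'I_m) (j p : 'I_k) : R :=
  s * (j == tperm ord0 (gord i) p)%:R + (1 - s) * (j == p)%:R.

Lemma sum_eq1 (c : 'I_k) : \sum_(p < k) ((c == p)%:R : R) = 1.
Proof. by rewrite (bigD1 c) //= eqxx big1 ?addr0 // => p; rewrite eq_sym => /negbTE ->. Qed.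

Lemma sum_eq1' (c : 'I_k) : \sum_(p < k) ((p == c)%:R : R) = 1.
Proof. by rewrite (bigD1 c) //= eqxx big1 ?addr0 // => p /negbTE ->. Qed.

Lemma Ps_rt s : 0 <= s <= 1 -> ranking_tensor (Ps s).
Proof.
move=> /andP [s0 s1] i; split; [|split].
- move=> j p; rewrite /Ps; apply: addr_ge0; apply: mulr_ge0 => //; lra.
- move=> j; rewrite /Ps big_split /= -!mulr_sumr.
  under eq_bigr do rewrite -(canF_eq (tpermK _ _)).
  by rewrite !sum_eq1; lra.
- move=> p; rewrite /Ps big_split /= -!mulr_sumr.
  by rewrite !sum_eq1'; lra.
Qed.

Lemma Pv_Ps s i j : Pv v (Ps s) i j = s * (j == gord i)%:R + (1 - s) * (j == ord0)%:R.
Proof. by rewrite Pv0 /Ps tpermL. Qed.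

Lemma uu_Ps s i : user_util mu v (Ps s) i = s + (1 - s) * mu i ord0.
Proof.
rewrite /user_util (eq_bigr (fun j => s * (mu i j * (j == gord i)%:R) + (1 - s) * (mu i j * (j == ord0)%:R))).
  rewrite big_split /= -!mulr_sumr (bigD1 (gord i)) //= big1 => [|j hj]; last by rewrite (negbTE hj) mulr0.
  rewrite (bigD1 ord0) //= [X in _ + _ * (_ + X)]big1 => [|j hj]; last by rewrite (negbTE hj) mulr0.
  have -> : mu i (gord i) = 1 by rewrite /muI eqxx.
  by rewrite eqxx mulr1 addr0 mulr1 addr0 mulr1.
by move=> j _; rewrite Pv_Ps; ring.
Qed.

Lemma iu_Ps s j : item_util v (Ps s) j = s * N0%:R + (1 - s) * m%:R * (j == ord0)%:R.
Proof.
rewrite /item_util (eq_bigr (fun i => s * (j == gord i)%:R + (1 - s) * (j == ord0)%:R)) => [|i _]; last exact: Pv_Ps.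
rewrite big_split /= -mulr_sumr (count_ord (fun g => (j == g)%:R)) sum_eq1 sumr_const card_ord.
by rewrite mulr_natr; ring.
Qed.


Lemma CS n (a : 'I_n -> R) : (\sum_i a i) ^+ 2 <= n%:R * \sum_i a i ^+ 2.
Proof.
case: n a => [|n] a; first by rewrite !big_ord0 expr0n /= mul0r.
set S := \sum_i a i; set T := \sum_i a i ^+ 2.
have h : 0 <= \sum_i (n.+1%:R * a i - S) ^+ 2 by apply: sumr_ge0 => i _; apply: sqr_ge0.
have e : \sum_i (n.+1%:R * a i - S) ^+ 2 = n.+1%:R * (n.+1%:R * T - S ^+ 2).
  rewrite (eq_bigr (fun i => n.+1%:R ^+ 2 * a i ^+ 2 - 2 * n.+1%:R * S * a i + S ^+ 2)) => [|i _]; last by ring.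
  rewrite !big_split /= sumrN -!mulr_sumr sumr_const card_ord -/S -/T mulr_natr; ring.
rewrite e in h; have hn : (0 : R) < n.+1%:R by rewrite ltr0Sn.
have : 0 <= n.+1%:R * T - S ^+ 2 by rewrite -(pmulr_rge0 _ hn).
lra.
Qed.

Hypothesis hd : (0 < d)%N.
Local Notation n0 := (N0%:R : R).
Local Notation dd := (d%:R : R).

Lemma n0_gt0 : 0 < n0. Proof. by rewrite ltr0n. Qed.
Lemma dd_gt0 : 0 < dd. Proof. by rewrite ltr0n. Qed.
Lemma m_eq : (m%:R : R) = n0 * (dd + 1).
Proof. by rewrite natrM -addn1 natrD. Qed.

Lemma qual0 : qual mu ord0 = n0 * (1 + dd / 2).
Proof.
rewrite /qual (eq_bigr (fun i => (fun g : 'I_k => if ord0 == g then 1 else 2^-1 : R) (gord i))) => [|i _]; last by rewrite /muI eqxx.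
rewrite (count_ord (fun g : 'I_k => if ord0 == g then 1 else 2^-1 : R)) big_ord_recl /=.
rewrite sumr_const card_ord.
have -> : (2^-1 : R) *+ d = dd / 2 by rewrite -[_ *+ d]mulr_natl mulrC.
done.
Qed.

Lemma qualj j : j != ord0 -> qual mu j = n0.
Proof.
move=> hj; rewrite /qual (eq_bigr (fun i => (fun g : 'I_k => (j == g)%:R : R) (gord i))) => [|i _].
  by rewrite (count_ord (fun g : 'I_k => (j == g)%:R : R)) sum_eq1 mulr1.
by rewrite /muI (negbTE hj); case: ifP.
Qed.

Lemma Qtot_eq : Qtot mu = n0 * (3 * dd + 2) / 2.
Proof.
rewrite /Qtot big_ord_recl qual0 (eq_bigr (fun=> n0)) => [|i _]; last by rewrite qualj // eq_sym neq_lift.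
by rewrite sumr_const card_ord -mulr_natr; field.
Qed.

Lemma Etot_eq : Etot m v = m%:R.
Proof.
rewrite /Etot (bigD1 ord0) //= big1 => [|p hp]; last by rewrite /vI (negbTE hp) normr0.
by rewrite /vI eqxx normr1 addr0 mulr1.
Qed.

Definition t0 := n0 * (dd + 2) * (dd + 1) / (3 * dd + 2).
Definition t1 := 2 * n0 * (dd + 1) / (3 * dd + 2).
Definition del := n0 * dd ^+ 2 / (3 * dd + 2).
Definition th := 2 * (dd + 1) / (3 * dd + 2).

Lemma den_gt0 : 0 < 3 * dd + 2.
Proof. have := dd_gt0; lra. Qed.

Lemma tgt0 : qual mu ord0 * Etot m v / Qtot mu = t0.
Proof.
rewrite qual0 Etot_eq Qtot_eq m_eq /t0; field.
have := n0_gt0; have := den_gt0; move=> h1 h2; apply/andP; split; apply/eqP; nra.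
Qed.

Lemma tgtj j : j != ord0 -> qual mu j * Etot m v / Qtot mu = t1.
Proof.
move=> hj; rewrite qualj // Etot_eq Qtot_eq m_eq /t1; field.
have := n0_gt0; have := den_gt0; move=> h1 h2; apply/andP; split; apply/eqP; nra.
Qed.


Lemma sum_t : t0 + dd * t1 = m%:R.
Proof. rewrite m_eq /t0 /t1; field; have := den_gt0; lra. Qed.

Lemma t0_del : t0 - n0 = del.
Proof. rewrite /t0 /del; field; have := den_gt0; lra. Qed.

Lemma del_gt0 : 0 < del.
Proof. by rewrite /del divr_gt0 ?mulr_gt0 ?exprn_gt0 ?n0_gt0 ?dd_gt0 ?den_gt0. Qed.

Lemma tgt_lift i : qual mu (lift ord0 i) * Etot m v / Qtot mu = t1.
Proof. by apply: tgtj; rewrite eq_sym neq_lift. Qed.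

Lemma Dsum_bound (y : 'I_k -> R) : \sum_j y j = m%:R ->
  (1 + dd^-1) * (y ord0 - t0) ^+ 2 <= \sum_j (y j - qual mu j * Etot m v / Qtot mu) ^+ 2.
Proof.
move=> hy; rewrite big_ord_recl tgt0.
under eq_bigr do rewrite tgt_lift.
rewrite big_ord_recl in hy.
have hA : \sum_(i < d) (y (lift ord0 i) - t1) = t0 - y ord0.
  rewrite sumrB sumr_const card_ord -mulr_natl; have := sum_t; lra.
have hcs := CS (fun i => y (lift ord0 i) - t1); rewrite /= hA in hcs.
set T := \sum_(i < d) _ in hcs *.
have hd0 := dd_gt0.
have : (y ord0 - t0) ^+ 2 / dd <= T.
  by rewrite ler_pdivrMr // mulrC; move: hcs; rewrite -sqrrN opprB.
have -> : (1 + dd^-1) * (y ord0 - t0) ^+ 2 = (y ord0 - t0) ^+ 2 + (y ord0 - t0) ^+ 2 / dd by field; lra.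
lra.
Qed.

Definition Kc := (1 + dd^-1) / (m + k)%:R.
Lemma Kc_gt0 : 0 < Kc.
Proof. by rewrite /Kc divr_gt0 // ?ltr0n ?addn_gt0 // addr_gt0 // invr_gt0 dd_gt0. Qed.

Lemma sqrtD_bound u : Uset mu v u -> Num.sqrt Kc * `|u.2 ord0 - t0| <= Num.sqrt (Dqua mu v u).
Proof.
move=> [P [hP ->]] /=.
rewrite -sqrtr_sqr -sqrtrM ?(ltW Kc_gt0) // ler_sqrt; last first.
  by rewrite /Dqua mulr_ge0 // ?invr_ge0 ?ler0n // sumr_ge0 // => j _; apply: sqr_ge0.
rewrite /Dqua /Kc mulrAC [X in _ <= X]mulrC ler_wpM2r // ?invr_ge0 ?ler0n //.
exact: Dsum_bound (iu_sum hP).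
Qed.

Definition ustar := util mu v (Ps 1).
Definition utgt := util mu v (Ps th).

Lemma th01 : 0 <= th <= 1.
Proof.
have := den_gt0; have := dd_gt0 => h1 h2.
apply/andP; split; first by rewrite /th divr_ge0 //; lra.
by rewrite /th ler_pdivrMr //; lra.
Qed.

Lemma ustar_U : Uset mu v ustar.
Proof. by exists (Ps 1); split => //; apply: Ps_rt; rewrite lexx ler01. Qed.
Lemma utgt_U : Uset mu v utgt.
Proof. by exists (Ps th); split => //; apply: Ps_rt; exact: th01. Qed.

Lemma ustar1 i : ustar.1 i = 1.
Proof. by rewrite /= uu_Ps subrr mul0r addr0. Qed.
Lemma ustar2 j : ustar.2 j = n0.
Proof. by rewrite /= iu_Ps subrr !mul0r addr0 mul1r. Qed.

Lemma D_ustar : Num.sqrt (Dqua mu v ustar) = Num.sqrt Kc * del.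
Proof.
have -> : Dqua mu v ustar = Kc * del ^+ 2.
  rewrite /Dqua big_ord_recl tgt0.
  under eq_bigr do rewrite tgt_lift ustar2.
  rewrite ustar2 sumr_const card_ord -mulr_natl /Kc /del /t0 /t1.
  have := n0_gt0; have := dd_gt0; have := den_gt0 => h1 h2 h3.
  field; repeat (apply/andP; split); apply: lt0r_neq0; nra.
by rewrite sqrtrM ?(ltW Kc_gt0) // sqrtr_sqr gtr0_norm ?del_gt0.
Qed.

Lemma utgt2 j : utgt.2 j = qual mu j * Etot m v / Qtot mu.
Proof.
rewrite /= iu_Ps; case: (eqVneq j ord0) => [->|hj].
  rewrite tgt0 ?eqxx ?mulr1 m_eq /th /t0; field; have := den_gt0; lra.
rewrite tgtj // ?mulr0 ?addr0 /th /t1; field; have := den_gt0; lra.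
Qed.

Lemma D_utgt : Dqua mu v utgt = 0.
Proof. by rewrite /Dqua big1 ?mulr0 // => j _; rewrite utgt2 subrr expr0n. Qed.

Lemma utgt_sum : \sum_i utgt.1 i = m%:R - del / 2.
Proof.
rewrite /= (eq_bigr (fun i => th + (1 - th) * mu i ord0)) => [|i _]; last exact: uu_Ps.
rewrite big_split /= sumr_const card_ord -mulr_sumr.
have -> : \sum_i mu i ord0 = qual mu ord0 by [].
rewrite qual0 -mulr_natl m_eq /th /del; field; have := den_gt0; lra.
Qed.

End Model.

Section Ar.
Variable R : realType.
Lemma arith1 (M S y n t del b Rr : R) : S <= M -> S <= M - (y - n) / 2 ->
  b * `|y - t| <= Rr -> t - n = del -> 0 < del -> 0 <= b -> b <= 2^-1 ->
  S - Rr <= M - b * del.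
Proof.
move=> h1 h2 h3 h4 h5 h6 h7.
case: (lerP 0 (y - t)) => h0.
  rewrite ger0_norm // in h3.
  have := mulr_ge0 h6 h0; have : 0 <= (2^-1 - b) * del by apply: mulr_ge0; lra.
  nra.
rewrite ltr0_norm // in h3.
case: (lerP n y) => hn.
  have : 0 <= (2^-1 - b) * (y - n) by apply: mulr_ge0; lra.
  nra.
have : 0 <= b * (n - y) by apply: mulr_ge0; lra.
nra.
Qed.

Lemma arith2 (M S y n t del b Rr : R) : S <= M -> S <= M - (y - n) / 2 ->
  b * `|y - t| <= Rr -> t - n = del -> 0 < del -> 2^-1 < b ->
  M - del / 2 <= S - Rr -> S = M - del / 2 /\ t <= y.
Proof.
move=> h1 h2 h3 h4 h5 h6 h7.
case: (lerP 0 (y - t)) => h0.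
  rewrite ger0_norm // in h3.
  have := mulr_ge0 (ltW (lt_trans _ h6)) h0.
  have : (0:R) < 2^-1 by rewrite invr_gt0 ltr0n.
  move=> hh; move/(_ hh) => hbe.
  split; first nra. lra.
exfalso; rewrite ltr0_norm // in h3.
case: (lerP n y) => hn.
  have : 0 < (b - 2^-1) * (t - y) by apply: mulr_gt0; lra.
  nra.
have : 0 <= (b - 2^-1) * (n - y) by apply: mulr_ge0; lra.
have : 0 < b * del by apply: mulr_gt0 => //; lra.
have : 0 < (b - 2^-1) * del by apply: mulr_gt0; lra.
nra.
Qed.

Lemma arith3 (M S y n t del b Rr : R) : S <= M -> S <= M - (y - n) / 2 ->
  b * `|y - t| <= Rr -> t - n = del -> 0 < del -> 2^-1 < b ->
  S - Rr <= M - del / 2.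
Proof.
move=> h1 h2 h3 h4 h5 h6.
case: (lerP 0 (y - t)) => h0.
  rewrite ger0_norm // in h3.
  have := mulr_ge0 (ltW (lt_trans _ h6)) h0.
  have : (0:R) < 2^-1 by rewrite invr_gt0 ltr0n.
  move=> hh; move/(_ hh) => hbe. lra.
rewrite ltr0_norm // in h3.
case: (lerP n y) => hn.
  have : 0 < (b - 2^-1) * (t - y) by apply: mulr_gt0; lra.
  nra.
have : 0 <= (b - 2^-1) * (n - y) by apply: mulr_ge0; lra.
have : 0 < (b - 2^-1) * del by apply: mulr_gt0; lra.
nra.
Qed.
End Ar.

Definition Lseq (R : realType) (n : nat) : R := 1 - n%:R ^+ 2 / (2 * (n%:R + 1) * (3 * n%:R + 2)).

Lemma Lcvg (R : realType) : Lseq R n @[n --> \oo] --> (5 / 6 : R).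
Proof.
apply/cvgrPdist_lt => e e0; apply: filterS (nbhs_infty_gtr e^-1) => n hn.
have n0 : (0 : R) <= n%:R by apply: ler0n.
have hen : 1 < e * n%:R by rewrite -ltr_pdivrMl // mulr1.
have -> : 5 / 6 - Lseq R n = - ((5 * n%:R + 2) / (6 * (n%:R + 1) * (3 * n%:R + 2))).
  rewrite /Lseq; field; apply/andP; split; apply: lt0r_neq0; nra.
rewrite normrN ger0_norm; last by apply: divr_ge0; nra.
rewrite ltr_pdivrMr; last by nra.
nra.
Qed.

Section Main.
Variables (R : realType) (N0 d : nat).
Hypotheses (hN0 : (0 < N0)%N) (hd : (0 < d)%N).
Local Notation m := (N0 * d.+1)%N.
Local Notation k := d.+1.
Local Notation mu := (@muI R N0 d).
Local Notation v := (@vI R d).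
Local Notation n0 := (N0%:R : R).
Local Notation dd := (d%:R : R).

Lemma comb_le (l : R) A B X Y : 0 < l < 1 -> (A <= X%:E)%E -> (B <= Y%:E)%E ->
  ((1 - l)%:E * A + l%:E * B <= ((1 - l) * X + l * Y)%:E)%E.
Proof.
move=> /andP [l0 l1] hA hB; rewrite (EFinD ((1 - l) * X)) (EFinM (1 - l)) (EFinM l).
apply: leeD; rewrite lee_pmul2l //= ?lte_fin; lra.
Qed.

Lemma comb_lt (l : R) A B X Y : 0 < l < 1 -> (A <= X%:E)%E -> (B <= Y%:E)%E ->
  (A < X%:E)%E \/ (B < Y%:E)%E ->
  ((1 - l)%:E * A + l%:E * B < ((1 - l) * X + l * Y)%:E)%E.
Proof.
move=> /andP [l0 l1] hA hB [h|h].
- apply: ltle_addE; first by rewrite (EFinM (1 - l)) lte_pmul2l //= ?lte_fin; lra.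
  by rewrite EFinM lee_pmul2l //= ?lte_fin; lra.
- rewrite addeC [X in (_ < X%:E)%E]addrC; apply: ltle_addE; first by rewrite (EFinM l) lte_pmul2l //= ?lte_fin; lra.
  by rewrite EFinM lee_pmul2l //= ?lte_fin; lra.
Qed.

Definition Wst lam a1 a2 : \bar R := ((1 - lam) * (m%:R * phi 1 a1) + lam * (k%:R * phi n0 a2))%:E.

Lemma W_bound lam a1 a2 u : in_Theta lam a1 a2 -> Uset mu v u ->
  (W lam a1 a2 u <= Wst lam a1 a2)%E /\
  ((exists i, u.1 i != 1) \/ (exists j, u.2 j != n0) -> (W lam a1 a2 u < Wst lam a1 a2)%E).
Proof.
move=> [hl [ha1 ha2]] [P [hP ->]].
have hs1 : \sum_i (util mu v P).1 i <= m%:R * 1.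
  rewrite mulr1 -[in X in _ <= X](card_ord m) -sumr_const; apply: ler_sum => i _; exact: uu_le1.
have [U1 U2] := sum_psi ha1 ltr01 (fun i => uu_ge0 hP i) hs1.
have hs2 : \sum_j (util mu v P).2 j <= k%:R * n0.
  by rewrite /= (iu_sum hP) (m_eq R N0 d) mulrC -addn1 natrD.
have [I1 I2] := sum_psi ha2 (n0_gt0 R hN0) (fun j => iu_ge0 hP j) hs2.
rewrite /W /Wst /=.
split; first exact: (comb_le hl U1 I1).
move=> h; apply: (comb_lt hl U1 I1); case: h => [/U2|/I2] h; by [left|right].
Qed.


Lemma W_ustar lam a1 a2 : W lam a1 a2 (ustar R N0 d) = Wst lam a1 a2.
Proof.
rewrite /W /Wst.
have e1 : forall i, psi ((ustar R N0 d).1 i) a1 = (phi 1 a1)%:E.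
  by move=> i; rewrite (ustar1 R i) psi_pos // ltr01.
have e2 : forall j, psi ((ustar R N0 d).2 j) a2 = (phi n0 a2)%:E.
  by move=> j; rewrite (ustar2 R hN0 j) (psi_pos _ (n0_gt0 R hN0)).
rewrite (eq_bigr _ (fun i _ => e1 i)) (eq_bigr _ (fun j _ => e2 j)).
rewrite !sumEFin !sumr_const !card_ord -(mulr_natl (phi 1 a1)) -(mulr_natl (phi n0 a2)).
by rewrite -!EFinM -EFinD.

Qed.

Local Notation c := (Num.sqrt (Kc R N0 d)).
Local Notation T0 := (t0 R N0 d).
Local Notation D := (del R N0 d).

Lemma c_gt0 : 0 < c.
Proof. by rewrite sqrtr_gt0 (Kc_gt0 R N0 d). Qed.

Lemma users_le1 u : Uset mu v u -> forall i, u.1 i <= 1.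
Proof. by move=> [P [hP ->]] i; exact: uu_le1. Qed.

Lemma items_sum u : Uset mu v u -> \sum_j u.2 j = m%:R.
Proof. by move=> [P [hP ->]]; exact: iu_sum. Qed.

Lemma F_facts u : Uset mu v u ->
  \sum_i u.1 i <= m%:R /\ \sum_i u.1 i <= m%:R - (u.2 ord0 - n0) / 2 /\
  c * `|u.2 ord0 - T0| <= Num.sqrt (Dqua mu v u).
Proof.
move=> hu; have hs := sqrtD_bound hN0 hd hu.
have hle := users_le1 hu.
case: hu => P [hP e]; rewrite e in hs hle *.
split; last split => //.
  rewrite -[in X in _ <= X](card_ord m) -[X in _ <= X]mulr1 mulr_natl -sumr_const.
  by apply: ler_sum => i _; exact: hle.
exact: (uu_sum hN0 hP).
Qed.

Lemma F_ustar beta : Fqua mu v beta (ustar R N0 d) = m%:R - beta * c * D.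
Proof.
rewrite /Fqua (D_ustar R hN0 hd) (eq_bigr (fun=> 1)) => [|i _]; last exact: ustar1.
by rewrite sumr_const card_ord mulrA.
Qed.

Lemma F_utgt beta : Fqua mu v beta (utgt R N0 d) = m%:R - D / 2.
Proof. by rewrite /Fqua (D_utgt R hN0 hd) sqrtr0 mulr0 subr0 (utgt_sum R hN0 hd). Qed.

Lemma brr beta u : 0 <= beta -> Uset mu v u ->
  beta * c * `|u.2 ord0 - T0| <= beta * Num.sqrt (Dqua mu v u).
Proof.
move=> hb hu; have [_ [_ h]] := F_facts hu.
by rewrite -mulrA ler_wpM2l.
Qed.

Lemma F_small beta u : 0 <= beta -> beta * c <= 2^-1 -> Uset mu v u ->
  Fqua mu v beta u <= Fqua mu v beta (ustar R N0 d).
Proof.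
move=> hb hbc hu; have [h1 [h2 _]] := F_facts hu.
rewrite F_ustar /Fqua.
apply: (arith1 h1 h2 (brr hb hu) (t0_del R N0 hd) (del_gt0 R hN0 hd)) => //.
exact: mulr_ge0 hb (ltW c_gt0).
Qed.

Lemma F_large beta u : 0 <= beta -> 2^-1 < beta * c -> Uset mu v u ->
  Fqua mu v beta u <= Fqua mu v beta (utgt R N0 d).
Proof.
move=> hb hbc hu; have [h1 [h2 _]] := F_facts hu.
rewrite F_utgt /Fqua.
exact: (arith3 h1 h2 (brr hb hu) (t0_del R N0 hd) (del_gt0 R hN0 hd)).
Qed.

Lemma F_large_max beta u : 0 <= beta -> 2^-1 < beta * c -> Uset mu v u ->
  Fqua mu v beta (utgt R N0 d) <= Fqua mu v beta u ->
  \sum_i u.1 i = m%:R - D / 2 /\ T0 <= u.2 ord0.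
Proof.
move=> hb hbc hu; have [h1 [h2 _]] := F_facts hu.
rewrite F_utgt /Fqua => h.
exact: (arith2 h1 h2 (brr hb hu) (t0_del R N0 hd) (del_gt0 R hN0 hd)).
Qed.


Lemma exists_small (y : 'I_k -> R) : \sum_j y j = m%:R -> T0 <= y ord0 -> exists j, y j < n0.
Proof.
move=> hs hy; case: (boolP [exists j, y j < n0]) => [/existsP [j hj]|/existsPn hall]; first by exists j.
exfalso.
have h1 : dd * n0 <= \sum_(i < d) y (lift ord0 i).
  rewrite -[in X in X <= _](card_ord d) mulr_natl -sumr_const; apply: ler_sum => i _.
  by have := hall (lift ord0 i); rewrite -leNgt.
rewrite big_ord_recl in hs.
have := t0_del R N0 hd; have := del_gt0 R hN0 hd; rewrite (m_eq R N0 d) in hs.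
move=> h2 h3; nra.
Qed.

Lemma ratio_eq : (m%:R - D / 2) / (m%:R * 1) = Lseq R d.
Proof.
rewrite mulr1 (m_eq R N0 d) /Lseq /del.
have := n0_gt0 R hN0; have := dd_gt0 R hd => h1 h2.
field; repeat (apply/andP; split); apply: lt0r_neq0; nra.
Qed.

Lemma per_d lam a1 a2 : in_Theta lam a1 a2 ->
  (exists u, W_maximizer mu v lam a1 a2 u) /\
  (forall beta : R, 0 < beta -> exists u, Uqua mu v beta u) /\
  forall u_th : profile R m k, W_maximizer mu v lam a1 a2 u_th ->
  forall u_q : R -> profile R m k,
    (forall beta : R, 0 < beta -> Uqua mu v beta (u_q beta)) ->
    (exists beta : R, 0 < beta /\
        lorenz_gt u_th.1 (u_q beta).1 /\ lorenz_gt u_th.2 (u_q beta).2) /\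
    (((\sum_(i < m) (u_q beta).1 i) / (\sum_(i < m) u_th.1 i))
      @[beta --> +oo] --> Lseq R d).
Proof.
move=> hl.
have hc := c_gt0.
split.
  exists (ustar R N0 d); split; first exact: ustar_U.
  by move=> u' hu'; rewrite W_ustar; exact: (W_bound hl hu').1.
split.
  move=> beta hb; case: (lerP (beta * c) 2^-1) => h.
    exists (ustar R N0 d); split; first exact: ustar_U.
    by move=> u' hu'; apply: F_small => //; exact: ltW.
  exists (utgt R N0 d); split; first exact: utgt_U.
  by move=> u' hu'; apply: F_large => //; exact: ltW.
move=> uth [huth hmax] uq huq.
have hWs := hmax _ (ustar_U R N0 d); rewrite W_ustar in hWs.
have th1 : forall i, uth.1 i = 1.
  move=> i; case: (eqVneq (uth.1 i) 1) => // hi; exfalso.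
  have := (W_bound hl huth).2 (or_introl (ex_intro _ i hi)).
  by move/(le_lt_trans hWs); rewrite ltxx.
have th2 : forall j, uth.2 j = n0.
  move=> j; case: (eqVneq (uth.2 j) n0) => // hj; exfalso.
  have := (W_bound hl huth).2 (or_intror (ex_intro _ j hj)).
  by move/(le_lt_trans hWs); rewrite ltxx.
have sth : \sum_(i < m) uth.1 i = m%:R * 1.
  by rewrite (eq_bigr (fun=> 1)) => [|i _]; [rewrite sumr_const card_ord mulr_natl | exact: th1].
have big : forall beta, c^-1 < beta ->
    \sum_i (uq beta).1 i = m%:R - D / 2 /\ T0 <= (uq beta).2 ord0 /\ Uset mu v (uq beta).
  move=> beta hb.
  have hb0 : 0 < beta by apply: lt_trans hb; rewrite invr_gt0.
  have hbc : 2^-1 < beta * c.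
    have : 1 < beta * c by rewrite -ltr_pdivrMr // div1r.
    lra.
  have [hu hF] := huq beta hb0.
  have [e1 e2] := F_large_max (ltW hb0) hbc hu (hF _ (utgt_U R N0 hd)).
  by [].
split; last first.
  apply: cvg_near_cst; apply: filterS (nbhs_pinfty_gt (num_real (c^-1))) => beta hb.
  by have [-> _] := big beta hb; rewrite sth ratio_eq.
set b0 := c^-1 + 1.
have hb0 : c^-1 < b0 by rewrite /b0; lra.
have [s1 [s2 hu]] := big b0 hb0.
exists b0; split; first by rewrite /b0 addr_gt0 // invr_gt0.
split; split.
- move=> l /andP [l0 lm]; rewrite (lorenz_const th1 lm).
  by apply: lorenz_le_const => //; exact: users_le1.
- exists m; split; first by rewrite muln_gt0 hN0 /= leqnn.
  rewrite (lorenz_const th1 (leqnn _)) lorenz_total s1 -[X in _ < X]mulr1.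
  have := del_gt0 R hN0 hd; rewrite mulr1; lra.
- move=> l /andP [l0 lk]; rewrite (lorenz_const th2 lk).
  have := lorenz_avg (uq b0).2 (introT andP (conj l0 lk)).
  rewrite (items_sum hu) => h.
  have hk : (0 : R) < k%:R by rewrite ltr0n.
  rewrite -(ler_pM2r hk) -mulrA; apply: (le_trans h).
  by rewrite natrM mulrC.
- exists 1%N; split => //.
  have [j hj] := exists_small (items_sum hu) s2.
  rewrite (lorenz_const th2 (ltn0Sn _)) mul1r.
  exact: le_lt_trans (lorenz_min _ j) hj.
Qed.

End Main.


Unset Implicit Arguments.

Theorem proposition2 (R : realType) (N0 : nat) (hN0 : (1 <= N0)%N) :
  exists (mu : forall d : nat, 'I_(N0 * d.+1) -> 'I_d.+1 -> R)
         (v : forall d : nat, 'I_d.+1 -> R)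
         (L : nat -> R),
    (forall d i j, 0 <= mu d i j) /\
    (forall d (p q : 'I_d.+1), (p <= q)%N -> v d q <= v d p) /\
    (forall d p, 0 <= v d p) /\
    (L n @[n --> \oo] --> (5 / 6 : R)) /\
    forall (d : nat), (1 <= d)%N ->
    forall lam a1 a2 : R, in_Theta lam a1 a2 ->
      (exists u, W_maximizer (mu d) (v d) lam a1 a2 u) /\
      (forall beta : R, 0 < beta -> exists u, Uqua (mu d) (v d) beta u) /\
      forall u_th : profile R (N0 * d.+1) d.+1,
        W_maximizer (mu d) (v d) lam a1 a2 u_th ->
      forall u_q : R -> profile R (N0 * d.+1) d.+1,
        (forall beta : R, 0 < beta -> Uqua (mu d) (v d) beta (u_q beta)) ->
        (exists beta : R, 0 < beta /\
            lorenz_gt u_th.1 (u_q beta).1 /\ lorenz_gt u_th.2 (u_q beta).2) /\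
        (((\sum_(i < N0 * d.+1) (u_q beta).1 i) / (\sum_(i < N0 * d.+1) u_th.1 i))
          @[beta --> +oo] --> L d).
Proof.
exists (fun d => @muI R N0 d), (fun d => @vI R d), (Lseq R).
split; first by move=> d i j; exact: mu_ge0.
split.
  move=> d p q hpq; rewrite /vI; case: (eqVneq q ord0) => [hq|hq].
    have -> : p = ord0 by apply/val_inj; move: hpq; rewrite hq /=; case: (nat_of_ord p).
    by rewrite eqxx.
  by case: ifP => _; lra.
split; first by move=> d p; rewrite /vI; case: ifP => _; lra.
split; first exact: Lcvg.
move=> d hd lam a1 a2 hl.
exact: (per_d hN0 hd hl).
Qed.
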